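(* Let $I$ be a monoid and let $A$ be a finite set with an $I$-action $(\alpha_l,\alpha_r)$ whose left component $\alpha_l$ is trivial. Let $\mathrm{A}^r=\{x\in A:\ \text{for all } i\in I,\ \alpha_r(i)|_{xI}\text{ is one-to-one}\}$, where $xI=\{(x)\alpha_r(i):i\in I\}$. Then there is a bijection $\mathrm{Map}^r_I(A)\cong\mathrm{A}^r$.
   Context: Let $I$ be a monoid with operation $\otimes$. For a set $X$, $\mathrm{End}_l(X)$ denotes self-maps written on the left with product $f\circ g$ ($g$ first); $\mathrm{End}_r(X)$ denotes self-maps written on the right, $x\mapsto(x)f$, with $(x)(fg)=((x)f)g$. An $I$-action on $X$ is a pair $(\xi_l,\xi_r)$ of monoid homomorphisms $\xi_l:I\to\mathrm{End}_l(X)$, $\xi_r:I\to\mathrm{End}_r(X)$ with $(\xi_l(i)(x))\xi_r(j)=\xi_l(i)((x)\xi_r(j))$; ''$\alpha_l$ trivial'' means $\alpha_l(i)=\mathrm{id}_A$ for all $i$. $\mathrm{Map}^r_I(A)$ is the set of functions $f:I\to A$ with $(f(i\otimes j))\alpha_r(i)=\alpha_l(i)(f(j))$ for all $i,j\in I$ (here: $(f(i\otimes j))\alpha_r(i)=f(j)$). *)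

(* Defs.v *)
From mathcomp Require Import all_boot.
Set Implicit Arguments. Unset Strict Implicit. Unset Printing Implicit Defensive.

Definition is_monoid (I : Type) (op : I -> I -> I) (e : I) : Prop :=
  [/\ forall i j k, op i (op j k) = op (op i j) k,
      forall i, op e i = i &
      forall i, op i e = i].

Definition left_hom (I X : Type) (op : I -> I -> I) (e : I)
  (xl : I -> X -> X) : Prop :=
  (forall x, xl e x = x) /\
  (forall i j x, xl (op i j) x = xl i (xl j x)).

(* xi_r : I -> End_r(X) monoid homomorphism: (x)(fg) = ((x)f)g;
   we write (x)xi_r(i) as  xr i x. *)
Definition right_hom (I X : Type) (op : I -> I -> I) (e : I)
  (xr : I -> X -> X) : Prop :=
  (forall x, xr e x = x) /\
  (forall i j x, xr (op i j) x = xr j (xr i x)).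

Definition is_I_action (I X : Type) (op : I -> I -> I) (e : I)
  (xl xr : I -> X -> X) : Prop :=
  [/\ left_hom op e xl, right_hom op e xr &
      forall i j x, xr j (xl i x) = xl i (xr j x)].

Definition MapR_prop (I A : Type) (op : I -> I -> I)
  (al ar : I -> A -> A) (f : I -> A) : Prop :=
  forall i j, ar i (f (op i j)) = al i (f j).

Definition MapR (I A : Type) (op : I -> I -> I) (al ar : I -> A -> A) :=
  {f : I -> A | MapR_prop op al ar f}.

Definition orbitR (I A : Type) (ar : I -> A -> A) (x : A) : A -> Prop :=
  fun y => exists i, y = ar i x.

Definition AR_prop (I A : Type) (ar : I -> A -> A) (x : A) : Prop :=
  forall i y z, orbitR ar x y -> orbitR ar x z -> ar i y = ar i z -> y = z.

Definition AR (I A : Type) (ar : I -> A -> A) := {x : A | AR_prop ar x}.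

(* Main.v *)
From Stdlib Require Import Classical ClassicalDescription FunctionalExtensionality ProofIrrelevance.
Require Import Defs.
From mathcomp Require Import all_boot.

Definition cb (P : Prop) : bool :=
  if excluded_middle_informative P then true else false.

Lemma cbP (P : Prop) : cb P <-> P.
Proof. by rewrite /cb; case: excluded_middle_informative. Qed.

Fixpoint pw {I : Type} (op : I -> I -> I) (e k : I) (n : nat) : I :=
  match n with 0 => e | S n => op k (pw op e k n) end.

Lemma pwD (I : Type) (op : I -> I -> I) (e k : I) :
  (forall i j l, op i (op j l) = op (op i j) l) -> (forall i, op e i = i) ->
  forall a b, pw op e k (a + b) = op (pw op e k a) (pw op e k b).
Proof.
move=> hA hL; elim=> [|a IH] b /=; first by rewrite hL.
by rewrite IH hA.
Qed.

Lemma sig_eq (T : Type) (P : T -> Prop) (a b : sig P) :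
  proj1_sig a = proj1_sig b -> a = b.
Proof. case: a => a pa; case: b => b pb /= E; subst; f_equal; apply: proof_irrelevance. Qed.

Lemma inj_from_surj (A : finType) (F : A -> A) (O : {set A}) :
  (forall y, y \in O -> exists2 w, w \in O & F w = y) -> {in O &, injective F}.
Proof.
move=> hs; apply/imset_injP; rewrite eqn_leq leq_imset_card /=.
apply: subset_leq_card; apply/subsetP => y /hs [w wO <-]; exact: imset_f.
Qed.

Lemma surj_from_inj (A : finType) (F : A -> A) (O : {set A}) :
  {in O &, injective F} -> (forall y, y \in O -> F y \in O) ->
  forall y, y \in O -> exists2 w, w \in O & F w = y.
Proof.
move=> hi hc y yO.
have sub : F @: O \subset O by apply/subsetP => z /imsetP [w wO ->]; exact: hc.
have := subset_cardP (card_in_imset hi) sub => /(_ y).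
rewrite yO => /imsetP [w wO ->]; by exists w.
Qed.

Theorem mainTheorem12 (I : Type) (op : I -> I -> I) (e : I)
  (A : finType) (al ar : I -> A -> A) :
  is_monoid op e ->
  is_I_action op e al ar ->
  (forall i x, al i x = x) ->
  exists phi : MapR op al ar -> AR ar, bijective phi.
Proof.
case=> hA hL hR [_ [are arop] _] hal.
pose O x : {set A} := [set y | cb (orbitR ar x y)].
have inO x y : reflect (exists k, y = ar k x) (y \in O x).
  by rewrite inE; apply: (iffP idP) => /cbP.
have Ox x : x \in O x by apply/inO; exists e; rewrite are.
have Oc x i y : y \in O x -> ar i y \in O x.
  by move=> /inO [k ->]; apply/inO; exists (op k i); rewrite arop.
have ARO x : AR_prop ar x <-> forall i, {in O x &, injective (ar i)}.
  split=> [H i y z /inO [a ->] /inO [b ->] E|H i y z [a ->] [b ->] E].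
    by apply: H E; [exists a|exists b].
  by apply: (H i) E; apply/inO; [exists a|exists b].
have key (f : I -> A) : (forall i j, ar i (f (op i j)) = f j) -> forall k,
    (exists c, f k = ar c (f e)) /\ (exists j, ar k (f e) = f j).
  move=> hf k.
  have L1 j m : ar (pw op e k j) (f (pw op e k (j + m))) = f (pw op e k m).
    by rewrite pwD.
  have [n [p [p0 Enp]]] : exists n p, 0 < p /\ f (pw op e k n) = f (pw op e k (n + p)).
    apply: NNPP => H.
    pose g (i : 'I_(#|A|.+1)) := f (pw op e k i).
    have : injective g.
      move=> i j E; apply/val_inj => /=.
      case: (ltngtP i j) => // lt.
        case: H; exists i, (j - i); split; first by rewrite subn_gt0.
        rewrite (subnKC (ltnW lt)); exact: (E).
      case: H; exists j, (i - j); split; first by rewrite subn_gt0.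
      rewrite (subnKC (ltnW lt)); exact: (esym E).
    by move/leq_card; rewrite card_ord ltnn.
  have fe : f e = ar (pw op e k n) (f (pw op e k n)).
    by have := L1 n 0; rewrite addn0 => /esym.
  have pk : pw op e k 1 = k by rewrite /= hR.
  split.
    exists (pw op e k p.-1); rewrite fe -arop -pwD // Enp.
    have np : n + p = (n + p.-1) + 1 by rewrite -addnA addn1 prednK.
    by rewrite np L1 pk.
  exists (pw op e k p.-1); rewrite fe -arop.
  have -> : op (pw op e k n) k = pw op e k (n + 1) by rewrite pwD // pk.
  have np : n + p = (n + 1) + p.-1 by rewrite -addnA add1n prednK.
  by rewrite Enp np L1.
have Mf (f : MapR op al ar) i j : ar i (sval f (op i j)) = sval f j.
  by case: f => g /= hg; rewrite hg hal.
have phiP (f : MapR op al ar) : AR_prop ar (sval f e).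
  apply/ARO => i; apply: inj_from_surj => y /inO [k ->].
  have [_ [j ->]] := key _ (Mf f) k.
  exists (sval f (op i j)); last exact: Mf.
  have [[c ->] _] := key _ (Mf f) (op i j); apply/inO; by exists c.
pose phi (f : MapR op al ar) : AR ar := exist _ (sval f e) (phiP f).
have ex (x : AR ar) i : exists y, (y \in O (sval x)) && (ar i y == sval x).
  case: x => x /= /ARO hx.
  have [w wO Ew] := @surj_from_inj _ _ _ (hx i) (Oc x i) x (Ox x).
  by exists w; rewrite wO Ew eqxx.
pose g (x : AR ar) i := odflt (sval x) [pick y | (y \in O (sval x)) && (ar i y == sval x)].
have gP x i : (g x i \in O (sval x)) /\ ar i (g x i) = sval x.
  rewrite /g; case: pickP => [y /andP [h /eqP h2] //|H].
  by have [y] := ex x i; rewrite H.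
have gM x : MapR_prop op al ar (g x).
  move=> i j; rewrite hal.
  have [h1 h2] := gP x (op i j); have [h3 h4] := gP x j.
  have := proj2_sig x; move/ARO => hx.
  apply: (hx j); [exact: Oc|done|by rewrite -arop h2 h4].
pose psi (x : AR ar) : MapR op al ar := exist _ (g x) (gM x).
exists phi; exists psi.
  move=> f; apply: sig_eq => /=; apply: functional_extensionality => i.
  have [h1 h2] := gP (phi f) i.
  have := phiP f; move/ARO => hx.
  apply: (hx i) => //=.
    have [[c ->] _] := key _ (Mf f) i; apply/inO; by exists c.
  by rewrite h2 /= -{2}(hR i) Mf.
move=> x; apply: sig_eq => /=.
by have [_ h] := gP x e; rewrite are in h.
Qed.
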